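(* Let $q$ be a prime power, $n\ge 1$, and $L_q^n$ the lattice of all subspaces of $\mathbb{F}_q^n$ ordered by inclusion and ranked by dimension. Then $\mathcal{M}(L_q^n,-1)=0$.
   Context: For a finite ranked poset $\mathcal{P}$, $\mathrm{rk}(\mathcal{P})$ is the maximum rank and $\rho(x,y,z)=3\,\mathrm{rk}(\mathcal{P})-\mathrm{rk}(x)-\mathrm{rk}(y)-\mathrm{rk}(z)$. Let $\delta_3(x,y,z)=1$ if $x=y=z$ and $0$ otherwise, and $J$ the unique integer-valued function on triples $x\le y\le z$ with $\sum_{x\le a\le y\le b\le z}J(a,y,b)=\delta_3(x,y,z)$ for all $x\le y\le z$. Then $\mathcal{M}(\mathcal{P},t)=\sum_{x\le y\le z}J(x,y,z)\,t^{\rho(x,y,z)}$. *)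

(* Defs.v *)
From HB Require Import structures.
From mathcomp Require Import all_boot all_order all_algebra all_field.
Set Implicit Arguments. Unset Strict Implicit. Unset Printing Implicit Defensive.
Import GRing.Theory Num.Theory.
Local Open Scope ring_scope.

Section RankedPoset.
Variables (T : finType) (le : rel T) (rk : T -> nat).

Definition rkmax : nat := (\max_(x : T) rk x)%N.

Definition rho (x y z : T) : nat := (3 * rkmax - (rk x + rk y + rk z))%N.

Definition delta3 (x y z : T) : int := if (x == y) && (y == z) then 1 else 0.

Definition J_spec (J : T -> T -> T -> int) : Prop :=
  forall x y z, le x y -> le y z ->
    \sum_(a | le x a && le a y) \sum_(b | le y b && le b z) J a y b
    = delta3 x y z.

Definition Mpoly (J : T -> T -> T -> int) : {poly int} :=
  \sum_(x : T) \sum_(y : T) \sum_(z : T | le x y && le y z)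
     (J x y z)%:P * 'X^(rho x y z).
End RankedPoset.

(* The lattice L_q^n of subspaces of F^n (F a finite field with q elements),
   each subspace represented by its canonical generating matrix <<A>>. *)
Definition subspace (F : finFieldType) (n : nat) :=
  {A : 'M[F]_n | <<A>>%MS == A}.

Definition subspace_le (F : finFieldType) (n : nat) : rel (subspace F n) :=
  fun U V => (val U <= val V)%MS.

Definition subspace_dim (F : finFieldType) (n : nat) (U : subspace F n) : nat :=
  \rank (val U).

(* Main.v *)
Require Import Defs.
From HB Require Import structures.
From mathcomp Require Import all_boot all_order all_algebra all_field zify ring.
From Stdlib Require Import FunctionalExtensionality.
Set Implicit Arguments. Unset Strict Implicit. Unset Printing Implicit Defensive.
Import GRing.Theory Num.Theory.
Local Open Scope ring_scope.

Section Dual.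
Variable F : fieldType.

Lemma kerT_sub k m1 m2 (A : 'M[F]_(m1, k)) (A' : 'M[F]_(m2, k)) :
  (A' <= A)%MS -> (kermx A^T <= kermx A'^T)%MS.
Proof.
case/submxP=> D ->; apply/sub_kermxP.
by rewrite trmx_mul mulmxA mulmx_ker mul0mx.
Qed.

Lemma kerT_eq k m1 m2 (A : 'M[F]_(m1, k)) (A' : 'M[F]_(m2, k)) :
  (A :=: A')%MS -> (kermx A^T :=: kermx A'^T)%MS.
Proof.
move=> e; apply/eqmxP; rewrite !kerT_sub //; by rewrite e.
Qed.

Lemma kerT_kerT k m (A : 'M[F]_(m, k)) : (kermx (kermx A^T)^T :=: A)%MS.
Proof.
have sA : (A <= kermx (kermx A^T)^T)%MS.
  by apply/sub_kermxP; apply: trmx_inj; rewrite trmx_mul trmxK mulmx_ker trmx0.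
apply: eqmx_sym; apply/eqmxP.
rewrite -(mxrank_leqif_eq sA).2 !mxrank_ker !mxrank_tr.
by rewrite mxrank_ker mxrank_tr subKn ?rank_leq_col.
Qed.
End Dual.

Section Inv.
Variables (F : fieldType) (n : nat) (X Z : 'M[F]_n).
Hypothesis sXZ : (X <= Z)%MS.
Definition wX := (Z :\: X)%MS.
Definition BX := row_base wX.
Definition cY (Y : 'M[F]_n) := ((Y :&: wX)%MS *m pinvmx BX).
Definition dY (Y : 'M[F]_n) := kermx (cY Y)^T.
Definition psim (Y : 'M[F]_n) := (X + dY Y *m BX)%MS.

Lemma Xw0 : (X :&: wX)%MS = 0.
Proof. by rewrite capmxC capmx_diff. Qed.

Lemma wZ : (wX <= Z)%MS.
Proof. exact: diffmxSl. Qed.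

Lemma Zeq : (X + wX :=: Z)%MS.
Proof.
rewrite addsmxC; apply: eqmx_trans (addsmx_diff_cap_eq Z X).
apply: adds_eqmx; first exact: eqmx_refl.
apply: eqmx_sym; exact/capmx_idPr.
Qed.

Lemma disj_w m (A : 'M[F]_(m, n)) : (A <= wX)%MS -> (X :&: A)%MS = 0.
Proof.
move=> sA; apply/eqP; rewrite -submx0 -Xw0.
by apply: capmxS => //; apply: submx_refl.
Qed.

Lemma Yeq (Y : 'M[F]_n) : (X <= Y)%MS -> (Y <= Z)%MS -> (X + (Y :&: wX) :=: Y)%MS.
Proof.
move=> sXY sYZ; rewrite capmxC.
apply: eqmx_trans (matrix_modl wX sXY) _.
apply: eqmx_trans (cap_eqmx Zeq (eqmx_refl Y)) _.
exact/capmx_idPr.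
Qed.

Lemma rankY (Y : 'M[F]_n) : (X <= Y)%MS -> (Y <= Z)%MS ->
  \rank Y = (\rank X + \rank (Y :&: wX))%N.
Proof.
move=> sXY sYZ; rewrite -{1}(Yeq sXY sYZ) mxrank_disjoint_sum //.
by apply: disj_w; apply: capmxSr.
Qed.

Lemma BwE : (BX :=: wX)%MS.
Proof. exact: eq_row_base. Qed.

Lemma rank_c (Y : 'M[F]_n) : \rank (cY Y) = \rank (Y :&: wX).
Proof.
apply/eqP; rewrite eqn_leq mxrankM_maxl /=.
have e : cY Y *m BX = (Y :&: wX)%MS.
  by rewrite /cY mulmxKpV // BwE capmxSr.
by rewrite -{1}e mxrankM_maxl.
Qed.

Lemma rank_dB (Y : 'M[F]_n) : \rank (dY Y *m BX) = (\rank wX - \rank (Y :&: wX))%N.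
Proof.
rewrite mxrankMfree ?row_base_free // /dY mxrank_ker mxrank_tr rank_c.
by [].
Qed.

Lemma dB_sub (Y : 'M[F]_n) : (dY Y *m BX <= wX)%MS.
Proof. by rewrite -BwE submxMl. Qed.

Lemma rank_psi (Y : 'M[F]_n) : \rank (psim Y) = (\rank X + (\rank wX - \rank (Y :&: wX)))%N.
Proof.
by rewrite /psim mxrank_disjoint_sum ?rank_dB // disj_w // dB_sub.
Qed.

Lemma psi_ge (Y : 'M[F]_n) : (X <= psim Y)%MS.
Proof. exact: addsmxSl. Qed.

Lemma psi_le (Y : 'M[F]_n) : (psim Y <= Z)%MS.
Proof.
by rewrite addsmx_sub sXZ (submx_trans (dB_sub Y)) // wZ.
Qed.

Lemma psi_inv (Y : 'M[F]_n) : (X <= Y)%MS -> (Y <= Z)%MS -> (psim <<psim Y>> :=: Y)%MS.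
Proof.
move=> sXY sYZ.
have e1 : (<<psim Y>> :&: wX :=: dY Y *m BX)%MS.
  apply: eqmx_trans (cap_eqmx (genmxE _) (eqmx_refl _)) _.
  rewrite /psim addsmxC.
  apply: eqmx_trans (eqmx_sym (matrix_modl _ (dB_sub Y))) _.
  rewrite Xw0; exact: addsmx0.
have e2 : (cY <<psim Y>> :=: dY Y)%MS.
  apply: eqmx_trans (eqmxMr _ e1) _.
  have -> : dY Y *m BX *m pinvmx BX = dY Y.
    apply: (row_free_inj (row_base_free wX)).
    by rewrite mulmxKpV // submxMl.
  exact: eqmx_refl.
have e3 : (dY <<psim Y>> :=: cY Y)%MS.
  apply: eqmx_trans (kerT_eq e2) _; exact: kerT_kerT.
apply: eqmx_trans _ (Yeq sXY sYZ).
apply: adds_eqmx; first exact: eqmx_refl.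
apply: eqmx_trans (eqmxMr _ e3) _.
rewrite /cY mulmxKpV; first exact: eqmx_refl.
by rewrite BwE capmxSr.
Qed.

Lemma rankZ : \rank Z = (\rank X + \rank wX)%N.
Proof.
rewrite (rankY sXZ (submx_refl Z)).
by have /capmx_idPr e := wZ; rewrite e.
Qed.
End Inv.

Section Abs.
Variables (T : finType).
Definition mat := T -> T -> int.
Definition mm (A B : mat) : mat := fun x z => \sum_y A x y * B y z.
Definition I1 : mat := fun x z => (x == z)%:R.

Lemma mmA A B C : mm (mm A B) C = mm A (mm B C).
Proof.
apply: functional_extensionality => x; apply: functional_extensionality => z.
rewrite /mm; under eq_bigr do rewrite mulr_suml.
rewrite exchange_big; apply: eq_bigr => w _; rewrite mulr_sumr.
by apply: eq_bigr => y _; rewrite mulrA.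
Qed.

Lemma sum_delta (f : T -> int) y : \sum_d f d * (d == y)%:R = f y.
Proof.
rewrite (bigD1 y) //= eqxx mulr1 big1 ?addr0 // => d /negPf ->; by rewrite mulr0.
Qed.

Lemma sum_deltal (f : T -> int) y : \sum_d (y == d)%:R * f d = f y.
Proof.
rewrite -[RHS](sum_delta f y); apply: eq_bigr => d _.
by rewrite mulrC eq_sym.
Qed.

Lemma mm1 A : mm A I1 = A.
Proof.
apply: functional_extensionality => x; apply: functional_extensionality => z.
exact: sum_delta.
Qed.

Lemma m1m A : mm I1 A = A.
Proof.
apply: functional_extensionality => x; apply: functional_extensionality => z.
exact: (sum_deltal (A^~ z)).
Qed.

Lemma sum_ind (b : pred T) (f : T -> int) :
  \sum_c (b c)%:R * f c = \sum_(c | b c) f c.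
Proof.
rewrite [RHS]big_mkcond; apply: eq_bigr => c _.
by case: (b c); rewrite ?mul1r ?mul0r.
Qed.

Variable le : rel T.
Hypothesis le_refl : reflexive le.
Hypothesis le_anti : forall x y, le x y -> le y x -> x = y.
Hypothesis le_trans : transitive le.

Definition zeta : mat := fun x y => (le x y)%:R.

Lemma pinch x : (fun b => le x b && le b x) =1 pred1 x.
Proof.
move=> b /=; apply/idP/eqP => [/andP[h1 h2]|->]; last by rewrite le_refl.
exact: le_anti.
Qed.

Variable J : T -> T -> T -> int.
Hypothesis hJ : J_spec le J.

Definition mu : mat := fun x y => if le x y then J x y y else 0.
Definition mu' : mat := fun x y => if le x y then J x x y else 0.

Lemma zeta_mu : mm zeta mu = I1.
Proof.
apply: functional_extensionality => x; apply: functional_extensionality => z.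
rewrite /mm /zeta /mu /I1.
have -> : \sum_y (le x y)%:R * (if le y z then J y z z else 0) =
          \sum_(y | le x y && le y z) J y z z.
  rewrite sum_ind big_mkcondr /=; apply: eq_bigr => y _; by case: (le y z).
case hxz: (le x z).
  have -> : (x == z)%:R = delta3 x z z :> int.
    by rewrite /delta3 eqxx andbT; case: (x == z).
  rewrite -(hJ hxz (le_refl z)).
  apply: eq_bigr => a _; by rewrite (big_pred1 z (pinch z)).
rewrite big1; last by move=> y /andP[h1 h2]; rewrite (le_trans h1 h2) in hxz.
case: eqP => // exz; by rewrite exz le_refl in hxz.
Qed.

Lemma mu'_zeta : mm mu' zeta = I1.
Proof.
apply: functional_extensionality => x; apply: functional_extensionality => z.
rewrite /mm /zeta /mu' /I1.
have -> : \sum_y (if le x y then J x x y else 0) * (le y z)%:R =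
          \sum_(y | le x y && le y z) J x x y.
  rewrite [RHS]big_mkcond /=; apply: eq_bigr => y _.
  by case: (le x y); case: (le y z); rewrite ?mulr1 ?mulr0.
case hxz: (le x z).
  have -> : (x == z)%:R = delta3 x x z :> int.
    by rewrite /delta3 eqxx /=; case: (x == z).
  rewrite -(hJ (le_refl x) hxz).
  by rewrite (big_pred1 x (pinch x)).
rewrite big1; last by move=> y /andP[h1 h2]; rewrite (le_trans h1 h2) in hxz.
case: eqP => // exz; by rewrite exz le_refl in hxz.
Qed.

Lemma mu'E : mu' = mu.
Proof. by rewrite -[mu']mm1 -zeta_mu -mmA mu'_zeta m1m. Qed.

Lemma mu_zeta : mm mu zeta = I1.
Proof. by rewrite -mu'E mu'_zeta. Qed.

Lemma JE x y z : le x y -> le y z -> J x y z = mu x y * mu y z.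
Proof.
move=> hxy hyz.
pose K : mat := fun a b => if le a y && le y b then J a y b else 0.
pose E : mat := fun a b => (a == y)%:R * (b == y)%:R.
have hK : mm (mm zeta K) zeta = E.
  apply: functional_extensionality => a; apply: functional_extensionality => b.
  rewrite /mm /E /K /zeta.
  under eq_bigr do rewrite mulr_suml.
  rewrite exchange_big /=.
  have -> : \sum_a0 \sum_b0 (le a a0)%:R * (if le a0 y && le y b0 then J a0 y b0 else 0) * (le b0 b)%:R
     = \sum_(a0 | le a a0 && le a0 y) \sum_(b0 | le y b0 && le b0 b) J a0 y b0
       * (le a y && le y b)%:R.
    symmetry; rewrite big_mkcond; apply: eq_bigr => a0 _ /=.
    case h1: (le a a0); case h2: (le a0 y) => /=.
    - rewrite big_mkcond; apply: eq_bigr => b0 _ /=.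
      case h3: (le y b0); case h4: (le b0 b); rewrite /= ?mulr1 ?mulr0 ?mul1r //.
      by rewrite (le_trans h1 h2) (le_trans h3 h4) /= mulr1.
    - by symmetry; apply: big1 => b0 _; rewrite /= ?mul0r ?mulr0 ?mul0r.
    - by symmetry; apply: big1 => b0 _; rewrite /= ?mul0r ?mulr0 ?mul0r.
    - by symmetry; apply: big1 => b0 _; rewrite /= ?mul0r ?mulr0 ?mul0r.
  case hay: (le a y); case hyb: (le y b) => /=.
  - under eq_bigr do under eq_bigr do rewrite mulr1.
    rewrite (hJ hay hyb) /delta3 [y == b]eq_sym.
    by case: (a == y); case: (b == y).
  - rewrite big1 => [|a0 _]; last by rewrite big1 // => b0 _; rewrite mulr0n mulr0.
    case: (b =P y) => [e|]; last by rewrite mulr0.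
    by rewrite e le_refl in hyb.
  - rewrite big1 => [|a0 _]; last by rewrite big1 // => b0 _; rewrite mulr0n mulr0.
    case: (a =P y) => [e|]; last by rewrite mul0r.
    by rewrite e le_refl in hay.
  - rewrite big1 => [|a0 _]; last by rewrite big1 // => b0 _; rewrite mulr0n mulr0.
    case: (a =P y) => [e|]; last by rewrite mul0r.
    by rewrite e le_refl in hay.
have KE : K = mm (mm mu E) mu.
  by rewrite -hK !mmA zeta_mu mm1 -mmA mu_zeta m1m.
have := congr1 (fun M => M x z) KE; rewrite /K hxy hyz /= => ->.
rewrite /mm /E.
under eq_bigr do under eq_bigr do rewrite mulrA.
under eq_bigr do rewrite -mulr_suml sum_delta.
by rewrite -(sum_delta (fun c => mu x y * mu c z) y); apply: eq_bigr => c _; rewrite mulrAC.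
Qed.

Variable s : T -> int.
Hypothesis s2 : forall x, s x * s x = 1.
Variables b0 t1 : T.
Hypothesis hb : forall x, le b0 x.
Hypothesis ht : forall x, le x t1.
Hypothesis b0t1 : b0 != t1.
Hypothesis Pc : forall x z, \sum_y zeta x y * (s y * zeta y z * s z) =
                            \sum_y (s x * zeta x y * s y) * zeta y z.

Definition Zm : mat := fun x y => s x * zeta x y * s y.
Definition Wm : mat := fun x y => s x * mu x y * s y.

Lemma conjI (A B : mat) : mm A B = I1 ->
  mm (fun x y => s x * A x y * s y) (fun x y => s x * B x y * s y) = I1.
Proof.
move=> hAB; apply: functional_extensionality => x; apply: functional_extensionality => z.
transitivity (s x * mm A B x z * s z).
  rewrite /mm mulr_sumr mulr_suml; apply: eq_bigr => y _.
  have h := s2 y.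
  transitivity (s x * (A x y * B y z) * s z * (s y * s y)); last by rewrite h mulr1.
  ring.
rewrite hAB /I1; case: eqP => [->|]; last by rewrite mulr0 mul0r.
by rewrite mulr1 s2.
Qed.

Lemma ZW : mm Zm Wm = I1.
Proof. exact: conjI zeta_mu. Qed.
Lemma WZ : mm Wm Zm = I1.
Proof. exact: conjI mu_zeta. Qed.

Lemma zZ : mm zeta Zm = mm Zm zeta.
Proof.
apply: functional_extensionality => x; apply: functional_extensionality => z.
exact: Pc.
Qed.

Lemma Wz : mm Wm zeta = mm zeta Wm.
Proof.
transitivity (mm Wm (mm (mm zeta Zm) Wm)).
  by rewrite mmA ZW mm1.
by rewrite zZ !mmA -(mmA Wm) WZ m1m.
Qed.

Lemma muW : mm mu Wm = mm Wm mu.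
Proof.
transitivity (mm mu (mm (mm Wm zeta) mu)).
  by rewrite mmA zeta_mu mm1.
by rewrite Wz !mmA -(mmA mu) mu_zeta m1m.
Qed.

Theorem main_abs :
  \sum_x \sum_y \sum_(z | le x y && le y z) J x y z * (s x * s y * s z) = 0.
Proof.
transitivity (\sum_x \sum_y \sum_z mu x y * mu y z * (s x * s y * s z)).
  apply: eq_bigr => x _; apply: eq_bigr => y _.
  rewrite big_mkcond; apply: eq_bigr => z _.
  case: ifP => [/andP[h1 h2]|]; first by rewrite JE.
  by rewrite /mu; case: (le x y); case: (le y z) => //= _; rewrite ?(mulr0, mul0r).
transitivity (\sum_x \sum_z mm Wm mu x z * s z).
  apply: eq_bigr => x _; rewrite exchange_big; apply: eq_bigr => z _.
  rewrite /mm mulr_suml; apply: eq_bigr => y _; rewrite /Wm; ring.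
rewrite -muW.
transitivity (\sum_x \sum_y mu x y * s y * (y == t1)%:R).
  apply: eq_bigr => x _; rewrite /mm.
  under eq_bigr do rewrite mulr_suml.
  rewrite exchange_big; apply: eq_bigr => y _.
  have <- : mm mu zeta y t1 = (y == t1)%:R by rewrite mu_zeta.
  rewrite /mm /zeta mulr_sumr; apply: eq_bigr => z _.
  rewrite ht /Wm; have h := s2 z.
  transitivity (mu x y * s y * mu y z * (s z * s z)); first by ring.
  by rewrite h mulr1 mulr1n mulr1.
transitivity (\sum_x zeta b0 x * mu x t1 * s t1).
  by apply: eq_bigr => x _; rewrite sum_delta /zeta hb mulr1n mul1r.
by rewrite -mulr_suml -/(mm zeta mu b0 t1) zeta_mu /I1 (negPf b0t1) mul0r.
Qed.
End Abs.

Lemma sign_flip a b : odd (a + b) -> (-1)^+a = - (-1)^+b :> int.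
Proof.
rewrite oddD -(signr_odd _ a) -(signr_odd _ b).
by case: (odd a); case: (odd b).
Qed.

Lemma genmx_canon (F : fieldType) n (A : 'M[F]_n) : <<<<A>>>>%MS == <<A>>%MS.
Proof. by rewrite genmx_id. Qed.

Lemma sum_sign_odd (F : finFieldType) n (x z : subspace F n) :
  subspace_le x z -> odd (subspace_dim z + subspace_dim x) ->
  \sum_(y | subspace_le x y && subspace_le y z) (-1)^+(subspace_dim y) = 0 :> int.
Proof.
rewrite /subspace_le /subspace_dim => sXZ Hodd.
set X := val x in sXZ Hodd *; set Z := val z in sXZ Hodd *.
pose psi (y : subspace F n) : subspace F n :=
  exist _ <<psim X Z (val y)>>%MS (genmx_canon _).
have Pp y : (X <= val y)%MS -> (val y <= Z)%MS ->
    (X <= val (psi y))%MS && (val (psi y) <= Z)%MS.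
  by move=> _ _; rewrite /= !genmxE psi_ge psi_le.
have Pinv y : (X <= val y)%MS -> (val y <= Z)%MS -> psi (psi y) = y.
  move=> h1 h2; apply: val_inj => /=.
  rewrite (eq_genmx (psi_inv sXZ h1 h2)).
  exact/eqP/(valP y).
have Psg y : (X <= val y)%MS -> (val y <= Z)%MS ->
    (-1)^+(\rank (val (psi y))) = - (-1)^+(\rank (val y)) :> int.
  move=> h1 h2; apply: sign_flip => /=.
  rewrite genmxE rank_psi (rankY sXZ h1 h2).
  move: Hodd; rewrite (rankZ sXZ).
  have : (\rank (val y :&: wX X Z) <= \rank (wX X Z))%N by apply: mxrankS; apply: capmxSr.
  set c := \rank (val y :&: wX X Z); set k := \rank (wX X Z); set r := \rank X.
  move=> hc; have -> : (r + (k - c) + (r + c) = r + k + r)%N by lia.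
  by [].
set S := (X in X = 0).
have HS : S = - S.
  rewrite {1}/S (reindex_onto psi psi); last by move=> i /andP[h1 h2]; apply: Pinv.
  rewrite /S -sumrN; apply: eq_big.
    move=> j; apply/idP/idP.
      case/andP=> /andP[h1 h2] /eqP <-; exact: Pp.
    by move=> /andP[h1 h2]; rewrite (Pinv j h1 h2) eqxx andbT; apply: Pp.
  by move=> j /andP[/andP[h1 h2] /eqP e]; rewrite -{2}e (Psg (psi j) h1 h2) opprK.
lia.
Qed.

Lemma sign_sub a b : (b <= a)%N -> (-1)^+(a - b) = (-1)^+a * (-1)^+b :> int.
Proof.
move=> hba; rewrite -(signr_odd _ (a - b)) -(signr_odd _ a) -(signr_odd _ b) oddB //.
by case: (odd a); case: (odd b).
Qed.

Lemma sign_sq k : (-1)^+k * (-1)^+k = 1 :> int.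
Proof. by rewrite -(signr_odd _ k); case: (odd k); rewrite ?mulr1 ?mulrNN ?mulr1. Qed.

Theorem proposition6p15 (F : finFieldType) (n : nat) (hn : (0 < n)%N)
  (J : subspace F n -> subspace F n -> subspace F n -> int)
  (hJ : J_spec (@subspace_le F n) J) :
  (Mpoly (@subspace_le F n) (@subspace_dim F n) J).[-1] = 0.
Proof.
set le := @subspace_le F n; set dim := @subspace_dim F n.
pose s (x : subspace F n) : int := (-1)^+(dim x).
set R := rkmax dim.
have dimR x : (dim x <= R)%N by rewrite /R /rkmax; exact: leq_bigmax.
transitivity ((-1)^+(3 * R) *
  \sum_x \sum_y \sum_(z | le x y && le y z) J x y z * (s x * s y * s z)).
  rewrite /Mpoly horner_sum mulr_sumr; apply: eq_bigr => x _.
  rewrite horner_sum mulr_sumr; apply: eq_bigr => y _.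
  rewrite horner_sum mulr_sumr; apply: eq_bigr => z _.
  rewrite hornerCM hornerXn /rho sign_sub; last first.
    have := dimR x; have := dimR y; have := dimR z; lia.
  by rewrite /s -/R !exprD mulrCA.
have le_refl : reflexive le by move=> x; apply: submx_refl.
have le_anti : forall x y, le x y -> le y x -> x = y.
  move=> x y h1 h2; apply: val_inj.
  have e : (val x :=: val y)%MS by apply/eqmxP; apply/andP; split.
  by rewrite -(eqP (valP x)) -(eqP (valP y)); apply: eq_genmx.
have le_trans : transitive le by move=> y x z; apply: submx_trans.
have s2 x : s x * s x = 1 by apply: sign_sq.
pose b0 : subspace F n := exist _ <<0 : 'M[F]_n>>%MS (genmx_canon _).
pose t1 : subspace F n := exist _ <<1%:M : 'M[F]_n>>%MS (genmx_canon _).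
have hb x : le b0 x by rewrite /le /subspace_le /= genmxE sub0mx.
have ht x : le x t1 by rewrite /le /subspace_le /= genmxE submx1.
have b0t1 : b0 != t1.
  apply/eqP => e; have := congr1 (fun u : subspace F n => \rank (val u)) e.
  rewrite /= !genmxE mxrank0 mxrank1 => h; rewrite -h in hn; by [].
have Pc : forall x z, \sum_y zeta le x y * (s y * zeta le y z * s z) =
                      \sum_y (s x * zeta le x y * s y) * zeta le y z.
  move=> x z.
  have -> : \sum_y zeta le x y * (s y * zeta le y z * s z) =
            (\sum_(y | le x y && le y z) s y) * s z.
    rewrite mulr_suml [RHS]big_mkcond; apply: eq_bigr => y _ /=.
    rewrite /zeta; case: (le x y); case: (le y z) => /=;
      by rewrite ?(mulr1n, mulr0n, mulr1, mul1r, mulr0, mul0r).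
  have -> : \sum_y (s x * zeta le x y * s y) * zeta le y z =
            s x * (\sum_(y | le x y && le y z) s y).
    rewrite mulr_sumr [RHS]big_mkcond; apply: eq_bigr => y _ /=.
    rewrite /zeta; case: (le x y); case: (le y z) => /=;
      by rewrite ?(mulr1n, mulr0n, mulr1, mul1r, mulr0, mul0r).
  case hxz: (le x z); last first.
    rewrite big_pred0 ?mul0r ?mulr0 // => y; apply/negbTE/negP => /andP[h1 h2].
    by rewrite (le_trans _ _ _ h1 h2) in hxz.
  case ho: (odd (dim z + dim x)).
    by rewrite (sum_sign_odd hxz ho) mul0r mulr0.
  rewrite mulrC /s; congr (_ * _).
  move: ho; rewrite oddD -(signr_odd _ (dim z)) -(signr_odd _ (dim x)).
  by case: (odd (dim z)); case: (odd (dim x)).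
by rewrite (main_abs le_refl le_anti le_trans hJ s2 hb ht b0t1 Pc) mulr0.
Qed.
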